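(* Consider the optimization problem $\mathbf{P}_{\rm SICD}$ over the variables $\boldsymbol{\tau}_0=(\tau_{0,t})_{t=1}^T$ and $\mathbf{E}=(E_{i,t})_{1\le i\le K,\,1\le t\le T}$: maximize $\displaystyle\sum_{t=1}^{T}\sum_{i=1}^{K}(1-\tau_{0,t})\log_2(1+x_{i,t})$, where $x_{i,t}=\dfrac{g_{i,t}E_{i,t}}{\sigma^2(1-\tau_{0,t})+\sum_{j=i+1}^{K}g_{j,t}E_{j,t}}$ (empty sums are $0$), subject to (i) $\sum_{n=1}^{t}E_{i,n}\le\sum_{n=1}^{t}\gamma_{i,n}\tau_{0,n}$ for all $i,t$; (ii) $x_{i,t}\ge S_i^{\rm th}$ for all $i,t$, understood in the form $g_{i,t}E_{i,t}\ge S_i^{\rm th}\big(\sigma^2(1-\tau_{0,t})+\sum_{j=i+1}^{K}g_{j,t}E_{j,t}\big)$; (iii) $0\le\tau_{0,t}\le1$ for all $t$; (iv) $E_{i,t}\ge0$ for all $i,t$. Then $\mathbf{P}_{\rm SICD}$ is a convex optimization problem: its objective is a concave function of $(\boldsymbol{\tau}_0,\mathbf{E})$ and its feasible set is convex.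
   Context: There are $K$ users and a horizon of $T$ time slots of unit length. In slot $t$, a fraction $\tau_{0,t}$ is used for downlink wireless energy transfer and the remaining $1-\tau_{0,t}$ for simultaneous uplink transmission. $g_{i,t}>0$ is the uplink channel power gain of user $i$ in slot $t$, $\sigma^2>0$ the noise power, $\gamma_{i,t}=\eta_i h_{i,t}P_B>0$ the harvested power of user $i$ in slot $t$ (harvested energy $\gamma_{i,t}\tau_{0,t}$), $E_{i,t}$ the energy consumed by user $i$ in slot $t$, and $S_i^{\rm th}$ given decodability thresholds. $x_{i,t}$ is the SINR of user $i$ under successive interference cancellation in the fixed decoding order $1,\dots,K$. For $\tau_{0,t}=1$ the slot-$t$ term of the objective is taken to be $0$ (its limiting value). *)

(* Defs.v *)
From HB Require Import structures.
From mathcomp Require Import all_boot all_order all_algebra.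
From mathcomp Require Import reals exp.
Set Implicit Arguments. Unset Strict Implicit. Unset Printing Implicit Defensive.
Import Order.TTheory GRing.Theory Num.Theory.
Local Open Scope ring_scope.

Section SICD.
Variable R : realType.
Variables K T : nat.

Definition log2 (x : R) : R := ln x / ln 2.

(* Denominator of x_{i,t}: sigma^2 (1 - tau_{0,t}) + sum_{j=i+1}^K g_{j,t} E_{j,t}
   (users indexed 0..K-1, decoding order 0,1,...,K-1). *)
Definition interf (g : 'I_K -> 'I_T -> R) (sigma2 : R) (tau : 'I_T -> R)
  (E : 'I_K -> 'I_T -> R) (i : 'I_K) (t : 'I_T) : R :=
  sigma2 * (1 - tau t) + \sum_(j < K | (i < j)%N) g j t * E j t.

Definition sinr g sigma2 tau E (i : 'I_K) (t : 'I_T) : R :=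
  g i t * E i t / interf g sigma2 tau E i t.

(* Slot-t term of the objective; 0 when tau_{0,t} = 1 (limiting value). *)
Definition slot_term g sigma2 tau E (t : 'I_T) : R :=
  if tau t == 1 then 0
  else \sum_(i < K) (1 - tau t) * log2 (1 + sinr g sigma2 tau E i t).

Definition objective g sigma2 tau E : R := \sum_(t < T) slot_term g sigma2 tau E t.

Definition in_domain (tau : 'I_T -> R) (E : 'I_K -> 'I_T -> R) : Prop :=
  (forall t, 0 <= tau t <= 1) /\ (forall i t, 0 <= E i t).

Definition feasible g sigma2 (gamma : 'I_K -> 'I_T -> R) (Sth : 'I_K -> R)
  (tau : 'I_T -> R) (E : 'I_K -> 'I_T -> R) : Prop :=
  [/\ (forall i t, \sum_(n < T | (n <= t)%N) E i n
                   <= \sum_(n < T | (n <= t)%N) gamma i n * tau n),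
      (forall i t, g i t * E i t >= Sth i * interf g sigma2 tau E i t),
      (forall t, 0 <= tau t <= 1)
    & (forall i t, 0 <= E i t)].

Definition comb_tau (l : R) (tau1 tau2 : 'I_T -> R) : 'I_T -> R :=
  fun t => l * tau1 t + (1 - l) * tau2 t.
Definition comb_E (l : R) (E1 E2 : 'I_K -> 'I_T -> R) : 'I_K -> 'I_T -> R :=
  fun i t => l * E1 i t + (1 - l) * E2 i t.

End SICD.

(* Main.v *)
Require Import Defs.
From HB Require Import structures.
From mathcomp Require Import all_boot all_order all_algebra.
From mathcomp Require Import reals exp.
From mathcomp Require Import lra ring.
Import Order.TTheory GRing.Theory Num.Theory.
Local Open Scope ring_scope.

Section Aux.
Variable R : realType.

Definition HH (c a s : R) : R := a * ln (1 + s / (c * a)).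

Lemma aux_wr (c m a s : R) : 0 < c -> 0 <= m -> 0 <= a -> 0 <= s ->
  (m * a) * (1 + s / (c * a)) <= m * a + m * s / c.
Proof.
move=> c0 m0 a0 s0.
have [->|a0'] := eqVneq a 0.
  by rewrite !mulr0 mul0r add0r; apply: divr_ge0; [apply: mulr_ge0|apply: ltW].
rewrite le_eqVlt; apply/orP; left; apply/eqP; field; rewrite a0' andbT; exact: lt0r_neq0.
Qed.

Lemma ln_diff_le (x y : R) : 0 < x -> 0 < y -> ln x - ln y <= x / y - 1.
Proof.
move=> x0 y0; rewrite -ln_div ?posrE //.
have := @le_ln1Dx R (x / y - 1).
have -> : 1 + (x / y - 1) = x / y by ring.
apply.
have : 0 < x / y by apply: divr_gt0.
lra.
Qed.

Lemma HH_concave (c a1 a2 s1 s2 l : R) : 0 < c -> 0 <= a1 -> 0 <= a2 ->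
  0 <= s1 -> 0 <= s2 -> 0 <= l <= 1 ->
  l * HH c a1 s1 + (1 - l) * HH c a2 s2 <=
  HH c (l * a1 + (1 - l) * a2) (l * s1 + (1 - l) * s2).
Proof.
move=> c0 a10 a20 s10 s20 /andP[l0 l1].
rewrite /HH !mulrA.
set w1 := l * a1; set w2 := (1 - l) * a2.
have w10 : 0 <= w1 by apply: mulr_ge0.
have w20 : 0 <= w2 by apply: mulr_ge0; lra.
set r1 := 1 + s1 / (c * a1); set r2 := 1 + s2 / (c * a2).
set A := w1 + w2; set S := l * s1 + (1 - l) * s2.
have S0 : 0 <= S by rewrite /S; apply: addr_ge0; apply: mulr_ge0 => //; lra.
have r1ge : 1 <= r1.
  rewrite /r1 lerDl; apply: divr_ge0 => //; apply: mulr_ge0 => //; exact: ltW.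
have r2ge : 1 <= r2.
  rewrite /r2 lerDl; apply: divr_ge0 => //; apply: mulr_ge0 => //; exact: ltW.
have [A0|Apos] := eqVneq A 0.
  have e1 : w1 = 0 by rewrite /A in A0; lra.
  have e2 : w2 = 0 by rewrite /A in A0; lra.
  by rewrite A0 e1 e2 !mul0r addr0.
have Agt : 0 < A by rewrite lt0r Apos /A addr_ge0.
set r := 1 + S / (c * A).
have rge : 1 <= r.
  rewrite /r lerDl; apply: divr_ge0 => //; apply: mulr_ge0 => //; exact: ltW.
have r0 : 0 < r by lra.
have h1 := ln_diff_le r1 r (lt_le_trans ltr01 r1ge) r0.
have h2 := ln_diff_le r2 r (lt_le_trans ltr01 r2ge) r0.
have k1 : w1 * r1 <= w1 + l * s1 / c by apply: aux_wr.
have k2 : w2 * r2 <= w2 + (1 - l) * s2 / c by apply: aux_wr => //; lra.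
have Ar : A * r = A + S / c.
  rewrite /r /S; field; by rewrite ?Apos ?(lt0r_neq0 c0).
have sum : w1 * r1 + w2 * r2 <= A * r.
  rewrite Ar /S mulrDl /A; lra.
have q : (w1 * r1 + w2 * r2) / r <= A.
  by rewrite ler_pdivrMr.
have e : w1 * (r1 / r - 1) + w2 * (r2 / r - 1) = (w1 * r1 + w2 * r2) / r - A.
  rewrite /A; field; exact: lt0r_neq0.
have t1 := ler_wpM2l w10 h1.
have t2 := ler_wpM2l w20 h2.
rewrite -/A. nra.
Qed.

Lemma slot_eq (K T : nat) (g : 'I_K -> 'I_T -> R) (sigma2 : R) tau E (t : 'I_T) :
  0 < sigma2 -> (forall i t, 0 < g i t) -> tau t <= 1 -> (forall i, 0 <= E i t) ->
  slot_term g sigma2 tau E t =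
  HH sigma2 (1 - tau t) (\sum_(j < K) g j t * E j t) / ln 2.
Proof.
move=> s0 gpos tau1 E0.
rewrite /slot_term /HH.
have [->|tne] := eqVneq (tau t) 1.
  by rewrite subrr !mul0r.
have a0 : 0 < 1 - tau t by rewrite subr_gt0 lt_neqAle tne tau1.
set a := 1 - tau t.
pose D (m : nat) := sigma2 * a + \sum_(j < K | (m <= j)%N) g j t * E j t.
have Dpos m : 0 < D m.
  rewrite /D ltr_pwDl //; first by apply: mulr_gt0.
  by apply: sumr_ge0 => j _; apply: mulr_ge0; [apply: ltW|].
have Dstep (i : 'I_K) : D i = g i t * E i t + D i.+1.
  rewrite /D [in LHS](bigD1 i) //= addrCA; congr (_ + (_ + _)).
  by apply: eq_bigl => j; rewrite ltn_neqAle andbC eq_sym.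
have term (i : 'I_K) : ln (1 + sinr g sigma2 tau E i t) = ln (D i) - ln (D i.+1).
  rewrite -ln_div ?posrE //; congr ln.
  rewrite /sinr /interf -/a Dstep.
  have -> : sigma2 * a + \sum_(j < K | (i < j)%N) g j t * E j t = D i.+1 by [].
  field; exact: lt0r_neq0.
under eq_bigr => i _ do rewrite /log2 term.
have sumeq : \sum_(i < K) (ln (D i) - ln (D i.+1)) = ln (D 0) - ln (D K).
  rewrite -(big_mkord xpredT (fun i => ln (D i) - ln (D i.+1))).
  rewrite -[RHS]opprB -(telescope_sumr (fun k => ln (D k))) // -sumrN.
  by apply: eq_bigr => i _; rewrite opprB.
rewrite -mulr_sumr -mulr_suml sumeq mulrA -ln_div ?posrE //.
have D0 : D 0 = sigma2 * a + \sum_(j < K) g j t * E j t by [].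
have DK : D K = sigma2 * a.
  rewrite /D big_pred0 ?addr0 // => j; by rewrite leqNgt ltn_ord.
rewrite D0 DK; congr (_ * ln _ / _).
field; rewrite ?(lt0r_neq0 s0) ?(lt0r_neq0 a0) //.
Qed.
End Aux.

Theorem theorem1 (R : realType) (K T : nat)
  (g : 'I_K -> 'I_T -> R) (sigma2 : R) (gamma : 'I_K -> 'I_T -> R)
  (Sth : 'I_K -> R)
  (hg : forall i t, 0 < g i t) (hsigma : 0 < sigma2)
  (hgamma : forall i t, 0 < gamma i t) :
  (* the objective is concave on the domain (iii)-(iv) *)
  (forall (l : R) tau1 E1 tau2 E2, 0 <= l <= 1 ->
     in_domain tau1 E1 -> in_domain tau2 E2 ->
     l * objective g sigma2 tau1 E1 + (1 - l) * objective g sigma2 tau2 E2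
       <= objective g sigma2 (comb_tau l tau1 tau2) (comb_E l E1 E2))
  /\
  (* the feasible set is convex *)
  (forall (l : R) tau1 E1 tau2 E2, 0 <= l <= 1 ->
     feasible g sigma2 gamma Sth tau1 E1 -> feasible g sigma2 gamma Sth tau2 E2 ->
     feasible g sigma2 gamma Sth (comb_tau l tau1 tau2) (comb_E l E1 E2)).
Proof.
have ln2 : 0 < ln (2 : R) by apply: ln_gt0; rewrite ltr1n.
split.
  move=> l tau1 E1 tau2 E2 /andP[l0 l1] [d1t d1E] [d2t d2E].
  have hl : 0 <= 1 - l by lra.
  rewrite /objective.
  rewrite !mulr_sumr -big_split /=; apply: ler_sum => t _.
  have [t10 t11] := andP (d1t t).
  have [t20 t21] := andP (d2t t).
  rewrite !slot_eq //; last first.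
  - by move=> i; rewrite /comb_E; apply: addr_ge0; apply: mulr_ge0.
  - by rewrite /comb_tau; have := ler_wpM2l l0 t11; have := ler_wpM2l hl t21; lra.
  have -> : 1 - comb_tau l tau1 tau2 t = l * (1 - tau1 t) + (1 - l) * (1 - tau2 t).
    by rewrite /comb_tau; ring.
  have -> : \sum_(j < K) g j t * comb_E l E1 E2 j t =
      l * \sum_(j < K) g j t * E1 j t + (1 - l) * \sum_(j < K) g j t * E2 j t.
    rewrite !mulr_sumr -big_split /=; apply: eq_bigr => j _; rewrite /comb_E; ring.
  rewrite (mulrA l) (mulrA (1 - l)) -mulrDl ler_pM2r ?invr_gt0 //.
  apply: (@HH_concave R sigma2 (1 - tau1 t) (1 - tau2 t)
     (\sum_(j < K) g j t * E1 j t) (\sum_(j < K) g j t * E2 j t) l hsigma).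
  - by rewrite subr_ge0.
  - by rewrite subr_ge0.
  - by apply: sumr_ge0 => j _; apply: mulr_ge0; [apply: ltW|].
  - by apply: sumr_ge0 => j _; apply: mulr_ge0; [apply: ltW|].
  - by rewrite l0 l1.
move=> l tau1 E1 tau2 E2 /andP[l0 l1] [f1a f1b f1c f1d] [f2a f2b f2c f2d].
have hl : 0 <= 1 - l by lra.
have interfE i t : interf g sigma2 (comb_tau l tau1 tau2) (comb_E l E1 E2) i t =
   l * interf g sigma2 tau1 E1 i t + (1 - l) * interf g sigma2 tau2 E2 i t.
  rewrite /interf mulrDr mulrDr.
  have -> : \sum_(j < K | (i < j)%N) g j t * comb_E l E1 E2 j t =
      l * \sum_(j < K | (i < j)%N) g j t * E1 j t
      + (1 - l) * \sum_(j < K | (i < j)%N) g j t * E2 j t.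
    rewrite !mulr_sumr -big_split /=; apply: eq_bigr => j _; rewrite /comb_E; ring.
  rewrite /comb_tau; ring.
split.
- move=> i t.
  have -> : \sum_(n < T | (n <= t)%N) comb_E l E1 E2 i n =
      l * \sum_(n < T | (n <= t)%N) E1 i n + (1 - l) * \sum_(n < T | (n <= t)%N) E2 i n.
    rewrite !mulr_sumr -big_split /=; apply: eq_bigr => j _; rewrite /comb_E; ring.
  have -> : \sum_(n < T | (n <= t)%N) gamma i n * comb_tau l tau1 tau2 n =
      l * \sum_(n < T | (n <= t)%N) gamma i n * tau1 n
      + (1 - l) * \sum_(n < T | (n <= t)%N) gamma i n * tau2 n.
    rewrite !mulr_sumr -big_split /=; apply: eq_bigr => j _; rewrite /comb_tau; ring.
  by apply: lerD; apply: ler_wpM2l.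
- move=> i t; rewrite interfE.
  have -> : g i t * comb_E l E1 E2 i t = l * (g i t * E1 i t) + (1 - l) * (g i t * E2 i t).
    by rewrite /comb_E; ring.
  rewrite mulrDr; apply: lerD; rewrite mulrCA; apply: ler_wpM2l => //.
- move=> t; have [a b] := andP (f1c t); have [c d] := andP (f2c t).
  rewrite /comb_tau; apply/andP; split.
    by apply: addr_ge0; apply: mulr_ge0.
  by have := ler_wpM2l l0 b; have := ler_wpM2l hl d; lra.
- by move=> i t; rewrite /comb_E; apply: addr_ge0; apply: mulr_ge0.
Qed.
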